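(* Let $m\ge0$ be an integer. For $i\ge1$ put $\gamma_i=u-(1-zt)(1-t)^{i-1}(u-1)$. Then, as formal power series in $u,z,t$, $$\sum_{k\ge0}\frac{(u-1)^{m+1}(1-zt)^{m+1}u^k(1-t)^{k(m+1)}}{\prod_{i=1}^{k+1}\gamma_i}=-\sum_{j=0}^m(u-1)^j(1-zt)^ju^{m-j}\prod_{i=j+1}^m\bigl(1-(1-t)^i\bigr).$$
   Context: Each $\gamma_i$ has constant term $1$, so the quotients are formal power series over $\mathbb{Q}$, and the $k$-th summand is divisible by $u^k$, so the sum converges formally. An empty product equals $1$. *)

(* Defs.v *)
From HB Require Import structures.
From mathcomp Require Import all_boot all_order all_algebra.
Set Implicit Arguments. Unset Strict Implicit. Unset Printing Implicit Defensive.
Import Order.TTheory GRing.Theory Num.Theory.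
Local Open Scope ring_scope.

(* A formal power series in Q[[u,z,t]]: f a b c is the coefficient of u^a z^b t^c. *)
Definition fps := nat -> nat -> nat -> rat.

Definition fadd (f g : fps) : fps := fun a b c => f a b c + g a b c.
Definition fopp (f : fps) : fps := fun a b c => - f a b c.
Definition fsub (f g : fps) : fps := fadd f (fopp g).
Definition fmul (f g : fps) : fps := fun a b c =>
  \sum_(i < a.+1) \sum_(j < b.+1) \sum_(k < c.+1)
     f i j k * g (a - i)%N (b - j)%N (c - k)%N.

Definition fmono (p q r : nat) : fps := fun a b c =>
  ((a == p) && (b == q) && (c == r))%:R.
Definition fone : fps := fmono 0 0 0.
Definition U : fps := fmono 1 0 0.
Definition Z : fps := fmono 0 1 0.
Definition T : fps := fmono 0 0 1.

Definition fexp (f : fps) (n : nat) : fps := iter n (fmul f) fone.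

(* Inverse of a series with constant term 1: 1/f = sum_n (1 - f)^n; since
   1 - f has zero constant term, (1-f)^n has no monomials of total degree < n,
   so the coefficient of u^a z^b t^c only needs n <= a + b + c. *)
Definition finv (f : fps) : fps := fun a b c =>
  \sum_(n < (a + b + c).+1) fexp (fsub fone f) n a b c.
Definition fdiv (f g : fps) : fps := fmul f (finv g).

Definition fsum_seq (s : seq nat) (F : nat -> fps) : fps :=
  foldr (fun i acc => fadd (F i) acc) (fun _ _ _ => 0) s.
Definition fprod_seq (s : seq nat) (F : nat -> fps) : fps :=
  foldr (fun i acc => fmul (F i) acc) fone s.
(* product over lo <= i <= hi (empty product = 1 when hi < lo) *)
Definition fprod_range (lo hi : nat) (F : nat -> fps) : fps :=
  fprod_seq (iota lo (hi.+1 - lo)) F.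

Definition fseries_to (F : nat -> fps) (S : fps) : Prop :=
  forall a b c, exists N, forall n, (N <= n)%N ->
    fsum_seq (iota 0 n) F a b c = S a b c.

Definition gamma (i : nat) : fps :=
  fsub U (fmul (fmul (fsub fone (fmul Z T)) (fexp (fsub fone T) (i - 1)))
               (fsub U fone)).

(* Main.v *)
Require Import Defs.
From HB Require Import structures.
From mathcomp Require Import all_boot all_order all_algebra.
From mathcomp Require Import boolp.
From Stdlib Require Import FunctionalExtensionality.
From mathcomp Require Import zify ring.
Set Implicit Arguments. Unset Strict Implicit. Unset Printing Implicit Defensive.
Import Order.TTheory GRing.Theory Num.Theory.
Local Open Scope ring_scope.

Lemma fps_ext (f g : fps) : (forall a b c, f a b c = g a b c) -> f = g.
Proof.
move=> H; apply: functional_extensionality => a.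
apply: functional_extensionality => b; apply: functional_extensionality => c.
exact: H.
Qed.

Definition F : Type := fps.
HB.instance Definition _ := Choice.on F.

Definition fzero : F := fun _ _ _ => 0.

Lemma faddA : associative (fadd : F -> F -> F).
Proof. by move=> f g h; apply: fps_ext => a b c; rewrite /fadd addrA. Qed.
Lemma faddC : commutative (fadd : F -> F -> F).
Proof. by move=> f g; apply: fps_ext => a b c; rewrite /fadd addrC. Qed.
Lemma fadd0 : left_id fzero (fadd : F -> F -> F).
Proof. by move=> f; apply: fps_ext => a b c; rewrite /fadd add0r. Qed.
Lemma faddN : left_inverse fzero (fopp : F -> F) fadd.
Proof. by move=> f; apply: fps_ext => a b c; rewrite /fadd /fopp addNr. Qed.

HB.instance Definition _ := GRing.isZmodule.Build F faddA faddC fadd0 faddN.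

Notation P3 := {poly {poly {poly rat}}}.
Definition c3 (p : P3) a b c := p`_a`_b`_c.

Lemma c3M p q a b c : c3 (p * q) a b c =
  \sum_(i < a.+1) \sum_(j < b.+1) \sum_(k < c.+1)
     c3 p i j k * c3 q (a - i)%N (b - j)%N (c - k)%N.
Proof.
rewrite /c3 coefM !coef_sum; apply: eq_bigr => i _.
rewrite coefM coef_sum; apply: eq_bigr => j _.
by rewrite coefM.
Qed.

Definition trunc N (f : fps) : P3 :=
  \poly_(i < N) \poly_(j < N) \poly_(k < N) f i j k.

Definition rep N (p : P3) (f : fps) :=
  forall a b c, (a < N)%N -> (b < N)%N -> (c < N)%N -> c3 p a b c = f a b c.

Lemma rep_trunc N f : rep N (trunc N f) f.
Proof. by move=> a b c ha hb hc; rewrite /c3 /trunc coef_poly ha coef_poly hb coef_poly hc. Qed.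

Lemma rep_mul N p q f g : rep N p f -> rep N q g -> rep N (p * q) (fmul f g).
Proof.
move=> hp hq a b c ha hb hc; rewrite c3M /fmul.
apply: eq_bigr => i _; apply: eq_bigr => j _; apply: eq_bigr => k _.
have hi := ltn_ord i; have hj := ltn_ord j; have hk := ltn_ord k.
rewrite hp ?hq //; lia.
Qed.

Lemma fmulA : associative (fmul : F -> F -> F).
Proof.
move=> f g h; apply: fps_ext => a b c.
pose N := (a + b + c).+1.
have r1 := @rep_trunc N f; have r2 := @rep_trunc N g; have r3 := @rep_trunc N h.
have e1 := rep_mul (rep_mul r1 r2) r3.
have e2 := rep_mul r1 (rep_mul r2 r3).
have ha : (a < N)%N by rewrite /N; lia.
have hb : (b < N)%N by rewrite /N; lia.
have hc : (c < N)%N by rewrite /N; lia.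
by rewrite -(e1 a b c ha hb hc) -(e2 a b c ha hb hc) mulrA.
Qed.

Lemma fmulC : commutative (fmul : F -> F -> F).
Proof.
move=> f g; apply: fps_ext => a b c.
pose N := (a + b + c).+1.
have r1 := @rep_trunc N f; have r2 := @rep_trunc N g.
have e1 := rep_mul r1 r2; have e2 := rep_mul r2 r1.
have ha : (a < N)%N by rewrite /N; lia.
have hb : (b < N)%N by rewrite /N; lia.
have hc : (c < N)%N by rewrite /N; lia.
by rewrite -(e1 a b c ha hb hc) -(e2 a b c ha hb hc) mulrC.
Qed.

Lemma fmul1 : left_id (fone : F) fmul.
Proof.
move=> f; apply: fps_ext => a b c.
rewrite /fmul big_ord_recl [X in _ + X]big1 ?addr0; last first.
  by move=> i _; apply: big1 => j _; apply: big1 => k _; rewrite /fone /fmono /= mul0r.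
rewrite big_ord_recl [X in _ + X]big1 ?addr0; last first.
  by move=> i _; apply: big1 => k _; rewrite /fone /fmono /= mul0r.
rewrite big_ord_recl [X in _ + X]big1 ?addr0; last first.
  by move=> i _; rewrite /fone /fmono /= mul0r.
by rewrite /fone /fmono /= mul1r !subn0.
Qed.

Lemma fmulDl : left_distributive (fmul : F -> F -> F) fadd.
Proof.
move=> f g h; apply: fps_ext => a b c; rewrite /fmul /fadd -!big_split /=.
apply: eq_bigr => i _; rewrite -!big_split /=; apply: eq_bigr => j _.
rewrite -!big_split /=; apply: eq_bigr => k _; by rewrite mulrDl.
Qed.

Lemma fone_neq0 : (fone : F) != 0.
Proof.
apply/eqP => H; have := congr1 (fun f : F => f 0%N 0%N 0%N) H.
by rewrite /fone /fmono /=.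
Qed.

HB.instance Definition _ := GRing.Zmodule_isComNzRing.Build F fmulA fmulC fmul1 fmulDl fone_neq0.


Lemma fmulE (f g : fps) : fmul f g = (f : F) * (g : F). Proof. by []. Qed.
Lemma faddE (f g : fps) : fadd f g = (f : F) + (g : F). Proof. by []. Qed.
Lemma foppE (f : fps) : fopp f = - (f : F). Proof. by []. Qed.
Lemma fsubE (f g : fps) : fsub f g = (f : F) - (g : F). Proof. by []. Qed.
Lemma foneE : fone = (1 : F). Proof. by []. Qed.
Lemma fexpE (f : fps) n : fexp f n = (f : F) ^+ n.
Proof. elim: n => [//|n IH]; by rewrite exprS -IH. Qed.
Lemma fsum_seqE s (G : nat -> fps) : fsum_seq s G = \sum_(i <- s) (G i : F).
Proof. elim: s => [|x s IH]; by rewrite ?big_nil ?big_cons //= IH. Qed.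
Lemma fprod_seqE s (G : nat -> fps) : fprod_seq s G = \prod_(i <- s) (G i : F).
Proof. elim: s => [|x s IH]; by rewrite ?big_nil ?big_cons //= IH. Qed.

Lemma coef_sumF (s : seq nat) (G : nat -> F) a b c :
  (\sum_(i <- s) G i) a b c = \sum_(i <- s) G i a b c.
Proof. elim: s => [|x s IH]; by rewrite ?big_nil ?big_cons //= -IH. Qed.

Lemma coef_sumF_ord n (G : nat -> F) a b c :
  (\sum_(i < n) G i) a b c = \sum_(i < n) G i a b c.
Proof. elim: n => [|n IH]; by rewrite ?big_ord0 // !big_ord_recr /= -IH. Qed.

Lemma ct_mul (f g : F) : (f * g) 0%N 0%N 0%N = f 0%N 0%N 0%N * g 0%N 0%N 0%N.
Proof. by rewrite /GRing.mul /= /fmul !big_ord1. Qed.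

Lemma hpow_low (h : F) : h 0%N 0%N 0%N = 0 ->
  forall n a b c, (a + b + c < n)%N -> (h ^+ n) a b c = 0.
Proof.
move=> h0; elim=> [//|n IH] a b c hn.
rewrite exprS /GRing.mul /= /fmul.
apply: big1 => i _; apply: big1 => j _; apply: big1 => k _.
have hi := ltn_ord i; have hj := ltn_ord j; have hk := ltn_ord k.
case: (boolP [&& (i == 0%N :> nat), (j == 0%N :> nat) & (k == 0%N :> nat)]).
  case/and3P => /eqP -> /eqP -> /eqP ->; by rewrite h0 mul0r.
move=> hne; rewrite IH ?mulr0 //.
move: hne; rewrite !negb_and => hne.
have : (0 < i + j + k)%N.
  case/or3P: hne; lia.
lia.
Qed.

Lemma oneF a b c : (1 : F) a b c = fmono 0 0 0 a b c. Proof. by []. Qed.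
Lemma subF (f g : F) a b c : (f - g) a b c = f a b c - g a b c. Proof. by []. Qed.
Lemma addF (f g : F) a b c : (f + g) a b c = f a b c + g a b c. Proof. by []. Qed.
Lemma oppF (f : F) a b c : (- f) a b c = - f a b c. Proof. by []. Qed.

Lemma fmul_local (f g g' : F) a b c :
  (forall i j k, (i <= a)%N -> (j <= b)%N -> (k <= c)%N -> g i j k = g' i j k) ->
  (f * g) a b c = (f * g') a b c.
Proof.
move=> H; rewrite /GRing.mul /= /fmul.
apply: eq_bigr => i _; apply: eq_bigr => j _; apply: eq_bigr => k _.
by rewrite H // leq_subr.
Qed.

Lemma finvP (g : F) : g 0%N 0%N 0%N = 1 -> g * (Defs.finv g : F) = 1.
Proof.
move=> g0; pose h : F := 1 - g.
have h0 : h 0%N 0%N 0%N = 0.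
  rewrite /h subF oneF.
  rewrite g0.
  by rewrite /fmono /= subrr.
apply: fps_ext => a b c.
pose N := (a + b + c)%N.
pose S : F := \sum_(n < N.+1) h ^+ n.
have loc : forall i j k, (i <= a)%N -> (j <= b)%N -> (k <= c)%N ->
    (Defs.finv g : F) i j k = S i j k.
  move=> i j k hi hj hk; rewrite /S coef_sumF_ord /Defs.finv.
  have hle : ((i + j + k).+1 <= N.+1)%N by rewrite /N; lia.
  rewrite (big_ord_widen _ (fun n => fexp (fsub fone g) n i j k) hle) big_mkcond.
  apply: eq_bigr => n _; rewrite fexpE; case: ifP => // /negbT; rewrite -leqNgt => hn.
  by rewrite hpow_low.
rewrite (fmul_local _ loc).
have -> : g * S = 1 - h ^+ N.+1.
  have e := subrXX (1 : F) h N.+1; rewrite expr1n in e; rewrite e.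
  have -> : 1 - h = g by rewrite /h opprB addrC subrK.
  congr (_ * _); rewrite /S; apply: eq_bigr => i _; by rewrite expr1n mul1r.
rewrite subF hpow_low ?subr0 //; rewrite /N; lia.
Qed.

Lemma rep_X N : rep N 'X U.
Proof.
move=> a b c _ _ _; rewrite /c3 coefX /U /fmono.
case: (a == 1%N) => /=; last by rewrite !coef0.
rewrite coef1; case: (b == 0%N) => /=; last by rewrite coef0.
by rewrite coef1.
Qed.

Lemma U_shift (Y : F) a b c :
  ((U : F) * Y) a b c = if a is a'.+1 then Y a' b c else 0.
Proof.
pose N := (a + b + c).+1.
have ha : (a < N)%N by rewrite /N; lia.
have hb : (b < N)%N by rewrite /N; lia.
have hc : (c < N)%N by rewrite /N; lia.
rewrite /GRing.mul /= -(rep_mul (@rep_X N) (@rep_trunc N Y) ha hb hc) /c3 coefXM.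
clearbody N; case: a ha => [|a] ha /=; first by rewrite !coef0.
exact: (@rep_trunc N Y a b c (ltnW ha) hb hc).
Qed.

Lemma Upow_low n (Y : F) a b c : (a < n)%N -> ((U : F) ^+ n * Y) a b c = 0.
Proof.
elim: n a Y => [//|n IH] a Y ha.
rewrite exprS -mulrA U_shift; case: a ha => [//|a] ha; exact: IH.
Qed.

Definition cc (R : comRingType) (m : nat) (q : R) j : R :=
  \prod_(i <- iota j.+1 (m - j)) (1 - q ^+ i).
Definition gg (R : comRingType) (m : nat) (u q b : R) : R :=
  \sum_(j < m.+1) b ^+ j * u ^+ (m - j) * cc m q j.

Lemma cc_step (R : comRingType) m (q : R) i : (i < m)%N ->
  cc m q i = (1 - q ^+ i.+1) * cc m q i.+1.
Proof.
move=> him; rewrite /cc.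
have -> : (m - i = (m - i.+1).+1)%N by lia.
by rewrite /= big_cons.
Qed.

Lemma cc_m (R : comRingType) m (q : R) : cc m q m = 1.
Proof. by rewrite /cc subnn /= big_nil. Qed.

Lemma func_eq (R : comRingType) m (u q b : R) :
  u * gg m u q (b * q) = (u - b) * gg m u q b + b ^+ m.+1.
Proof.
rewrite /gg.
have E1 : u * (\sum_(j < m.+1) (b * q) ^+ j * u ^+ (m - j) * cc m q j)
        - u * (\sum_(j < m.+1) b ^+ j * u ^+ (m - j) * cc m q j)
        = - \sum_(i < m) b ^+ i.+1 * u ^+ (m - i) * cc m q i.
  rewrite -mulrBr -sumrB big_ord_recl /= !expr0 subrr add0r.
  rewrite mulr_sumr -sumrN; apply: eq_bigr => i _.
  have hi := ltn_ord i.
  have -> : bump 0 i = i.+1 by rewrite /bump /=.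
  rewrite (cc_step q hi).
  have -> : (m - i = (m - i.+1).+1)%N by lia.
  rewrite exprMn [u ^+ (m - i.+1).+1]exprS.
  set x := b ^+ i.+1; set y := u ^+ (m - i.+1); set z := q ^+ i.+1; set w := cc m q i.+1.
  ring.
have E2 : b * (\sum_(j < m.+1) b ^+ j * u ^+ (m - j) * cc m q j)
        = \sum_(i < m) b ^+ i.+1 * u ^+ (m - i) * cc m q i + b ^+ m.+1.
  rewrite mulr_sumr big_ord_recr /= subnn expr0 cc_m.
  congr (_ + _); last by rewrite exprS !mulr1.
  apply: eq_bigr => i _; by rewrite exprS !mulrA.
rewrite mulrBl E2; move: E1; set A := u * _; set B := u * _; set C := \sum_(i < m) _.
move=> E1; rewrite -[A](subrK B) E1.
ring.
Qed.

Definition gam (R : comRingType) (u a q : R) i := u - a * q ^+ (i - 1).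
Definition PP (R : comRingType) (u a q : R) n := \prod_(i <- iota 1 n) gam u a q i.
Definition QQ (R : comRingType) (u a q : R) k n :=
  \prod_(i <- iota k.+2 (n - k.+1)) gam u a q i.

Lemma PQ (R : comRingType) (u a q : R) k n : (k < n)%N ->
  PP u a q n = PP u a q k.+1 * QQ u a q k n.
Proof.
move=> hk; rewrite /PP /QQ.
have -> : iota 1 n = iota 1 k.+1 ++ iota k.+2 (n - k.+1).
  rewrite -iotaD; congr iota; lia.
by rewrite big_cat.
Qed.

Lemma PP_S (R : comRingType) (u a q : R) n :
  PP u a q n.+1 = PP u a q n * gam u a q n.+1.
Proof.
rewrite /PP -[n.+1]addn1 iotaD big_cat /= big_cons big_nil mulr1.
by rewrite add1n addn1.
Qed.

Lemma QQ_S (R : comRingType) (u a q : R) k n : (k < n)%N ->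
  QQ u a q k n.+1 = QQ u a q k n * gam u a q n.+1.
Proof.
move=> hk; rewrite /QQ.
have -> : (n.+1 - k.+1 = (n - k.+1) + 1)%N by lia.
rewrite iotaD big_cat /= big_cons big_nil mulr1.
have -> : (k.+2 + (n - k.+1) = n.+1)%N by lia.
by [].
Qed.

Lemma QQ_n (R : comRingType) (u a q : R) n : QQ u a q n n.+1 = 1.
Proof. by rewrite /QQ subnn /= big_nil. Qed.

Lemma tele (R : comRingType) m (u a q : R) n :
  \sum_(k < n) a ^+ m.+1 * u ^+ k * q ^+ (k * m.+1) * QQ u a q k n
  = u ^+ n * gg m u q (a * q ^+ n) - gg m u q a * PP u a q n.
Proof.
elim: n => [|n IH].
  by rewrite big_ord0 /PP /= big_nil !expr0 !mulr1 mul1r subrr.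
rewrite big_ord_recr /= QQ_n mulr1.
have -> : \sum_(i < n) a ^+ m.+1 * u ^+ i * q ^+ (i * m.+1) * QQ u a q i n.+1
   = (\sum_(k < n) a ^+ m.+1 * u ^+ k * q ^+ (k * m.+1) * QQ u a q k n) * gam u a q n.+1.
  rewrite mulr_suml; apply: eq_bigr => i _; by rewrite QQ_S ?mulrA.
rewrite IH PP_S /gam subSS subn0.
have fe := func_eq m u q (a * q ^+ n).
rewrite [q ^+ n.+1]exprSr [a * (q ^+ n * q)]mulrA [u ^+ n.+1]exprS -[u * u ^+ n * _]mulrA [u * (u ^+ n * _)]mulrCA fe.
rewrite exprMn -exprM [(n * m.+1)%N]mulnC.
ring.
Qed.

Definition qF : F := 1 - (T : F).
Definition aF : F := (1 - (Z : F) * (T : F)) * ((U : F) - 1).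

Lemma ct_exp (f : F) n : (f ^+ n) 0%N 0%N 0%N = f 0%N 0%N 0%N ^+ n.
Proof. elim: n => [//|n IH]; by rewrite !exprS ct_mul IH. Qed.

Lemma ct_gam i : (gam (U : F) aF qF i) 0%N 0%N 0%N = 1.
Proof.
rewrite /gam subF ct_mul ct_exp /aF /qF !ct_mul !subF ct_mul !oneF.
by rewrite /U /Z /T /fmono /= expr1n; rewrite mulr1 mul0r !subr0 sub0r mulrN1 opprK.
Qed.

Lemma ct_PP n : (PP (U : F) aF qF n) 0%N 0%N 0%N = 1.
Proof.
rewrite /PP; elim: (iota 1 n) => [|i s IH]; first by rewrite big_nil oneF.
by rewrite big_cons ct_mul IH ct_gam mulr1.
Qed.

Lemma gammaE i : (gamma i : F) = gam (U : F) aF qF i.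
Proof.
rewrite /gamma /gam !fsubE !fmulE fexpE foneE /aF /qF.
congr (_ - _); ring.
Qed.

Lemma sum_iota0 (G : nat -> F) n : \sum_(i <- iota 0 n) G i = \sum_(i < n) G i.
Proof. by rewrite -(big_mkord xpredT) /index_iota subn0. Qed.

Lemma inv_shift k n : (k < n)%N ->
  QQ (U : F) aF qF k n * (Defs.finv (PP (U : F) aF qF n) : F)
  = Defs.finv (PP (U : F) aF qF k.+1).
Proof.
move=> hk.
have h1 := finvP (ct_PP n); have h2 := finvP (ct_PP k.+1).
have e := PQ (U : F) aF qF hk.
move: h1 h2 e.
set Pn := PP _ _ _ n; set Pk := PP _ _ _ k.+1; set Q := QQ _ _ _ k n.
set In := (Defs.finv Pn : F); set Ik := (Defs.finv Pk : F).
move=> h1 h2 e; rewrite e in h1.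
have h3 : Ik * Pk = 1 by rewrite mulrC.
by rewrite -[Ik]mulr1 -h1 !mulrA h3 mul1r.
Qed.

Theorem lemma7 (m : nat) :
  fseries_to
    (fun k => fdiv
       (fmul (fmul (fmul (fexp (fsub U fone) m.+1) (fexp (fsub fone (fmul Z T)) m.+1))
                   (fexp U k))
             (fexp (fsub fone T) (k * m.+1)))
       (fprod_range 1 k.+1 gamma))
    (fopp (fsum_seq (iota 0 m.+1) (fun j =>
       fmul (fmul (fmul (fexp (fsub U fone) j) (fexp (fsub fone (fmul Z T)) j))
                  (fexp U (m - j)))
            (fprod_range j.+1 m (fun i => fsub fone (fexp (fsub fone T) i)))))).
Proof.
rewrite /fseries_to => x y z; exists x.+1 => n hn.
rewrite !fsum_seqE !sum_iota0 foppE.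
have termE : forall k,
  (fdiv
       (fmul (fmul (fmul (fexp (fsub U fone) m.+1) (fexp (fsub fone (fmul Z T)) m.+1))
                   (fexp U k))
             (fexp (fsub fone T) (k * m.+1)))
       (fprod_range 1 k.+1 gamma) : F)
  = aF ^+ m.+1 * (U : F) ^+ k * qF ^+ (k * m.+1) * Defs.finv (PP (U : F) aF qF k.+1).
  move=> k; rewrite /fdiv /fprod_range fprod_seqE.
  have -> : (k.+2 - 1 = k.+1)%N by [].
  rewrite (eq_bigr _ (fun i _ => gammaE i)) -/(PP (U : F) aF qF k.+1).
  rewrite !fmulE !fexpE /aF /qF !fsubE foneE ?fmulE exprMn [(_ ^+ _ * _ ^+ _)]mulrC.
  by [].
under eq_bigr => k _ do rewrite termE.
have rhsE : \sum_(i < m.+1)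
     (fmul (fmul (fmul (fexp (fsub U fone) i) (fexp (fsub fone (fmul Z T)) i))
                  (fexp U (m - i)))
            (fprod_range i.+1 m (fun i => fsub fone (fexp (fsub fone T) i))) : F)
   = gg m (U : F) qF aF.
  rewrite /gg; apply: eq_bigr => j _.
  rewrite /fprod_range fprod_seqE subSS !fmulE !fexpE /aF /qF !fsubE foneE ?fmulE exprMn.
  rewrite [((U : F) - 1) ^+ j * _]mulrC /cc.
  congr (_ * _); apply: eq_bigr => i _; by rewrite fsubE fexpE.
rewrite rhsE.
have e1 : \sum_(i < n) aF ^+ m.+1 * (U : F) ^+ i * qF ^+ (i * m.+1) * Defs.finv (PP (U : F) aF qF i.+1)
  = (\sum_(i < n) aF ^+ m.+1 * (U : F) ^+ i * qF ^+ (i * m.+1) * QQ (U : F) aF qF i n)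
     * Defs.finv (PP (U : F) aF qF n).
  rewrite mulr_suml; apply: eq_bigr => i _; by rewrite -(inv_shift (ltn_ord i)) mulrA.
rewrite e1 tele mulrBl -mulrA -[gg m (U : F) qF aF * _ * _]mulrA finvP ?ct_PP // mulr1.
by rewrite subF Upow_low // sub0r.
Qed.
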